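(* The following two statements are equivalent. (A) For every finite nonempty LCM-closed set $\mathcal{N}\subseteq\mathbb{N}^+$ containing at least one element different from $1$, there exists an integer $d>1$ such that $\#\{n\in\mathcal{N}: d\mid n\}\ge \tfrac12\#\mathcal{N}$. (B) (Union-closed sets conjecture) For every finite union-closed family $\mathcal{S}$ of finite sets having at least one nonempty member, there exists an element $x\in\bigcup\mathcal{S}$ such that $\#\{A\in\mathcal{S}:x\in A\}\ge\tfrac12\#\mathcal{S}$.
   Context: $\mathbb{N}^+=\{1,2,3,\dots\}$. A nonempty $\mathcal{N}\subseteq\mathbb{N}^+$ is LCM-closed if $m,n\in\mathcal{N}$ implies $\mathrm{lcm}(m,n)\in\mathcal{N}$. A family $\mathcal{S}$ of sets is union-closed if $A,B\in\mathcal{S}$ implies $A\cup B\in\mathcal{S}$. *)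

(* Defs.v *)
From mathcomp Require Import all_boot.
Set Implicit Arguments. Unset Strict Implicit. Unset Printing Implicit Defensive.

(* A finite set of positive integers is represented by a duplicate-free
   sequence [N : seq nat]; its cardinality is [size N]. *)
Definition lcm_closed (N : seq nat) : Prop :=
  forall m n, m \in N -> n \in N -> lcmn m n \in N.

Definition statementA : Prop :=
  forall N : seq nat,
    uniq N -> N != [::] -> all (fun n => 0 < n) N -> lcm_closed N ->
    (exists2 n, n \in N & n != 1) ->
    exists2 d, 1 < d & size N <= 2 * count (fun n => d %| n) N.

Definition union_closed (T : finType) (S : {set {set T}}) : Prop :=
  forall A B, A \in S -> B \in S -> A :|: B \in S.

(* Since the family is
   finite and consists of finite sets, all elements live in the finite set
   U = \bigcup S, so we may take the ground type to be an arbitrary finType. *)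
Definition statementB : Prop :=
  forall (T : finType) (S : {set {set T}}),
    union_closed S -> (exists2 A, A \in S & A != set0) ->
    exists2 x, x \in \bigcup_(A in S) A &
      #|S| <= 2 * #|[set A in S | x \in A]|.

(* Main.v *)
Require Import Defs.
From mathcomp Require Import all_boot.
Fixpoint pr (i : nat) : nat :=
  if i is j.+1 then sval (prime_above (pr j)) else 2.
Lemma pr_prime i : prime (pr i).
Proof. by case: i => [|j] //=; case: prime_above. Qed.
Lemma pr_lt i j : i < j -> pr i < pr j.
Proof.
elim: j => // j IH; rewrite ltnS leq_eqVlt => /orP [/eqP ->|/IH h] /=;
  case: prime_above => p hp _ //=.
exact: ltn_trans h hp.
Qed.
Lemma pr_inj : injective pr.
Proof.
move=> i j e; apply/eqP; case: (ltngtP i j) => // h.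
  by have := pr_lt _ _ h; rewrite e ltnn.
by have := pr_lt _ _ h; rewrite e ltnn.
Qed.

Section AB.
Variable T : finType.
Definition f (x : T) := pr (enum_rank x).
Lemma f_inj : injective f.
Proof. by move=> x y /pr_inj/ord_inj/enum_rank_inj. Qed.
Lemma f_prime x : prime (f x). Proof. exact: pr_prime. Qed.
Definition nn (A : {set T}) := \prod_(x in A) f x.
Lemma nn_gt0 A : 0 < nn A.
Proof. by rewrite prodn_gt0 // => x; rewrite prime_gt0 ?f_prime. Qed.
Lemma logn_sum q A : prime q -> logn q (nn A) = \sum_(x in A) (q == f x).
Proof.
move=> qp; rewrite /nn.
suff [] : \sum_(x in A) (q == f x) = logn q (\prod_(x in A) f x) /\ 0 < \prod_(x in A) f x by [].
apply: (big_rec2 (fun a b => a = logn q b /\ 0 < b)) => [|i y1 y2 _ [h1 h2]].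
  by rewrite logn1.
have fp := prime_gt0 (f_prime i).
rewrite muln_gt0 h2 fp lognM //; split=> //.
by rewrite h1 (logn_prime _ (f_prime i)).
Qed.
Lemma logn_ex q A : prime q -> logn q (nn A) = [exists x in A, q == f x].
Proof.
move=> qp; rewrite logn_sum //.
case: existsP => [[x0 /andP [xA /eqP e]]|no].
  rewrite (bigD1 x0) //= e eqxx big1 // => y /andP [_ ny].
  by case: eqP => // /f_inj ex; rewrite ex eqxx in ny.
rewrite big1 // => y yA; case: eqP => // e; case: no; exists y.
by rewrite yA e eqxx.
Qed.
Lemma ex_f y (A : {set T}) : [exists x in A, f y == f x] = (y \in A).
Proof.
apply/existsP/idP => [[x /andP [xA /eqP /f_inj ->]] //|yA].
by exists y; rewrite yA eqxx.
Qed.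
Lemma nn_inj : injective nn.
Proof.
move=> A B e; apply/setP => y.
have := congr1 (logn (f y)) e; rewrite !logn_ex ?f_prime // !ex_f.
by case: (y \in A); case: (y \in B).
Qed.
Lemma nn_lcm A B : nn (A :|: B) = lcmn (nn A) (nn B).
Proof.
apply: eqn_from_log; rewrite ?lcmn_gt0 ?nn_gt0 // => q.
case qp: (prime q); last by rewrite /logn !qp.
rewrite logn_lcm ?nn_gt0 // !logn_ex //.
have -> : [exists x in A :|: B, q == f x] =
   [exists x in A, q == f x] || [exists x in B, q == f x].
  apply/existsP/orP => [[x /andP [/setUP [xA|xB] e]]|[/existsP [x /andP [xA e]]|/existsP [x /andP [xA e]]]].
  - by left; apply/existsP; exists x; rewrite xA.
  - by right; apply/existsP; exists x; rewrite xB.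
  - by exists x; rewrite inE xA.
  - by exists x; rewrite inE xA orbT.
by case: [exists x in A, _]; case: [exists x in B, _].
Qed.
End AB.
Arguments f {T}. Arguments nn {T}.
Lemma cnt (T : finType) (S : {set T}) (P : pred T) :
  count P (enum S) = #|[set A in S | P A]|.
Proof.
rewrite cardE -size_filter; apply/esym/perm_size.
have -> : [set A in S | P A] = S :&: [set A | P A].
  by apply/setP => A; rewrite !inE.
apply: perm_trans (enum_setI _ _) _.
by rewrite (eq_filter (a2 := P)) // => A; rewrite inE.
Qed.

Lemma dvd_nn (T : finType) q (A : {set T}) : prime q ->
  (q %| nn A) = [exists x in A, q == f x].
Proof.
move=> qp; have <- : (0 < logn q (nn A)) = (q %| nn A).
  by rewrite logn_gt0 mem_primes qp nn_gt0.
by rewrite logn_ex // lt0b.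
Qed.

Lemma AtoB : statementA -> statementB.
Proof.
move=> HA T S uc [A0 A0S A0n].
have cS : 0 < #|S| by apply/card_gt0P; exists A0.
set N := map nn (enum S).
have sN : size N = #|S| by rewrite size_map -cardE.
case: (HA N).
- by rewrite map_inj_uniq ?enum_uniq //; exact: nn_inj.
- by rewrite -size_eq0 sN -lt0n cS.
- by apply/allP => n /mapP [A _ ->]; exact: nn_gt0.
- move=> m n /mapP [A AS ->] /mapP [B BS ->]; rewrite -nn_lcm; apply: map_f.
  by rewrite mem_enum; apply: uc; rewrite -mem_enum.
- case/set0Pn: A0n => y yA.
  exists (nn A0); first by apply: map_f; rewrite mem_enum.
  apply/eqP => e; have := @logn_ex T (f y) A0 (f_prime _ y).
  by rewrite e logn1 ex_f yA.
move=> d d1 hd.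
have qp := pdiv_prime d1; set q := pdiv d in qp.
have hc : count (fun n => d %| n) N <= count (fun n => q %| n) N.
  by apply: sub_count => n /=; apply: dvdn_trans (pdiv_dvd d).
have hq : size N <= 2 * count (fun n => q %| n) N.
  by rewrite (leq_trans hd) // leq_mul2l hc orbT.
have [x /eqP fx | none] := pickP (fun x : T => f x == q).
  have ce : count (fun n => q %| n) N = #|[set A in S | x \in A]|.
    rewrite count_map -cnt; apply: eq_count => A /=.
    by rewrite dvd_nn // -fx ex_f.
  rewrite ce sN in hq.
  exists x => //.
  have : 0 < #|[set A in S | x \in A]|.
    by rewrite lt0n; apply/negP => /eqP e; rewrite e in hq; rewrite leqn0 in hq; rewrite (eqP hq) in cS.
  case/card_gt0P => A; rewrite inE => /andP [AS xA].
  by apply/bigcupP; exists A.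
have c0 : count (fun n => q %| n) N = 0.
  rewrite -(count_pred0 N); apply: eq_in_count => n /mapP [A _ ->] /=.
  rewrite dvd_nn //; apply/existsP => [[x /andP [_ e]]].
  by have := none x; rewrite eq_sym e.
by rewrite c0 sN leqn0 in hq; rewrite (eqP hq) in cS.
Qed.

Definition ppow (i : nat) : bool := (1 < i) && (pdiv i ^ logn (pdiv i) i == i).

Lemma ppow_lcm i m n : ppow i -> 0 < m -> 0 < n ->
  (i %| lcmn m n) = (i %| m) || (i %| n).
Proof.
case/andP => i1 /eqP e m0 n0; have pp := pdiv_prime i1.
by rewrite -e !pfactor_dvdn ?lcmn_gt0 ?m0 ?n0 // logn_lcm // leq_max.
Qed.

Lemma ppow_pk p k : prime p -> 0 < k -> ppow (p ^ k).
Proof.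
case: k => // k pp _; rewrite /ppow pdiv_pfactor // pfactorK // eqxx andbT.
by rewrite -[1](expn0 p) ltn_exp2l // prime_gt1.
Qed.

Lemma ppow_prime p : prime p -> ppow p.
Proof. by move=> pp; have := @ppow_pk p 1 pp; rewrite expn1; apply. Qed.

Lemma ppow_gt1 i : ppow i -> 1 < i.
Proof. by case/andP. Qed.

Definition gs M n : {set 'I_M.+1} := [set i : 'I_M.+1 | ppow i && (i %| n)].

Lemma gs_lcm M m n : 0 < m -> 0 < n -> gs M (lcmn m n) = gs M m :|: gs M n.
Proof.
move=> m0 n0; apply/setP => i; rewrite !inE.
by case h: (ppow i) => //=; rewrite ppow_lcm.
Qed.

Lemma gs_key M m n : 0 < m -> 0 < n -> m <= M -> gs M m = gs M n ->
  forall p, logn p m <= logn p n.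
Proof.
move=> m0 n0 mM e p.
case k0: (logn p m) => [|k] //.
have : 0 < logn p m by rewrite k0.
rewrite logn_gt0 mem_primes => /and3P [pp _ _].
have qm : p ^ k.+1 %| m by rewrite -k0 pfactor_dvdnn.
have qM : p ^ k.+1 < M.+1 by rewrite ltnS (leq_trans (dvdn_leq m0 qm)).
have : Ordinal qM \in gs M m by rewrite inE /= ppow_pk.
by rewrite e inE /= => /andP [_]; rewrite pfactor_dvdn.
Qed.

Lemma gs_inj M m n : 0 < m -> 0 < n -> m <= M -> n <= M -> gs M m = gs M n -> m = n.
Proof.
move=> m0 n0 mM nM e; apply: eqn_from_log => // p.
by apply/eqP; rewrite eqn_leq (@gs_key M m n m0 n0 mM e) (@gs_key M n m n0 m0 nM (esym e)).
Qed.

Lemma BtoA : statementB -> statementA.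
Proof.
move=> HB N uN N0 pos lc [n0 n0N n01].
have posN n : n \in N -> 0 < n by move=> nN; apply: (allP pos).
set M := \max_(n <- N) n.
have leM n : n \in N -> n <= M by move=> nN; apply: (@leq_bigmax_seq _ N xpredT id n).
set g := gs M.
have ginj : {in N &, injective g}.
  by move=> m n mN nN; apply: gs_inj; rewrite ?posN ?leM.
set S := [set A | A \in map g N].
have memS A : (A \in S) = (A \in map g N) by rewrite inE.
case: (HB _ S).
- move=> A B; rewrite !memS => /mapP [m mN ->] /mapP [n nN ->].
  by rewrite -gs_lcm ?posN //; apply: map_f; apply: lc.
- exists (g n0); first by rewrite memS map_f.
  have n1 : 1 < n0 by rewrite ltn_neqAle eq_sym n01 posN.
  have pM : pdiv n0 < M.+1.
    by rewrite ltnS (leq_trans (dvdn_leq (posN _ n0N) (pdiv_dvd n0))) ?leM.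
  apply/set0Pn; exists (Ordinal pM).
  by rewrite inE /= ppow_prime ?pdiv_prime ?pdiv_dvd.
move=> x /bigcupP [A0 A0S xA0] hx.
have px : ppow x.
  by move: A0S xA0; rewrite memS => /mapP [n _ ->]; rewrite inE => /andP [].
exists (nat_of_ord x); first exact: ppow_gt1.
have uS : uniq (map g N) by rewrite map_inj_in_uniq.
have cS : #|S| = size N by rewrite cardsE (card_uniqP _) ?size_map.
have cX : #|[set A in S | x \in A]| = count (fun n => x %| n) N.
  have -> : [set A in S | x \in A] = [set A : {set 'I_M.+1} in filter (fun A : {set 'I_M.+1} => x \in A) (map g N)].
    by apply/setP => A; rewrite !inE mem_filter andbC.
  rewrite cardsE (card_uniqP _) ?filter_uniq // size_filter count_map.
  by apply: eq_in_count => n nN /=; rewrite inE px.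
by rewrite -cS -cX.
Qed.

Theorem theorem1 : statementA <-> statementB.
Proof. split; [exact: AtoB | exact: BtoA]. Qed.
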